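(* Let $\mathcal H=\mathbb C^2$. (1) If $c$ and $T$ are operators on $\mathcal H$ with $\{c,c^\dagger\}=\mathbb 1$, $c^2=0$, and $T=T^\dagger$ strictly positive, then $a:=TcT^{-1}$ and $b:=Tc^\dagger T^{-1}$ satisfy $\{a,b\}=\mathbb 1$, $a^2=0$, $b^2=0$. (2) Conversely, if $a,b$ are operators on $\mathcal H=\mathbb C^2$ with $\{a,b\}=\mathbb 1$, $a^2=0$, $b^2=0$, then there exist operators $c$ and $T$ on $\mathcal H$ with $\{c,c^\dagger\}=\mathbb 1$, $c^2=0$, $T=T^\dagger$ strictly positive, such that $a=TcT^{-1}$ and $b=Tc^\dagger T^{-1}$.
   Context: $\{x,y\}=xy+yx$ denotes the anticommutator; $\mathbb 1$ is the identity on $\mathbb C^2$; operators on $\mathbb C^2$ are $2\times2$ complex matrices and $^\dagger$ denotes the adjoint with respect to the standard inner product. *)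

(* Defs.v *)
(* Complex numbers: an arbitrary numClosedFieldType C
   (algebraically closed field with conjugation and the induced partial order). *)
From HB Require Import structures.
From mathcomp Require Import all_boot all_order all_algebra.
Set Implicit Arguments. Unset Strict Implicit. Unset Printing Implicit Defensive.
Import Order.TTheory GRing.Theory Num.Theory.
Local Open Scope ring_scope.

Definition adj {C : numClosedFieldType} {n : nat} (A : 'M[C]_n) : 'M[C]_n :=
  (map_mx Num.conj A)^T.

Definition anticomm {C : numClosedFieldType} {n : nat} (x y : 'M[C]_n) : 'M[C]_n :=
  x *m y + y *m x.

Definition strictly_pos {C : numClosedFieldType} {n : nat} (T : 'M[C]_n) : Prop :=
  adj T = T /\
  forall v : 'cV[C]_n, v != 0 -> 0 < ((map_mx Num.conj v)^T *m T *m v) ord0 ord0.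

(* Main.v *)
Require Import Defs.
From HB Require Import structures.
From mathcomp Require Import all_boot all_order all_algebra ring.
Import Order.TTheory GRing.Theory Num.Theory.
Local Open Scope ring_scope.

Section Aux.
Variable C : numClosedFieldType.

Definition hh {m n} (v : 'M[C]_(m, n)) : 'M[C]_(n, m) := (map_mx Num.conj v)^T.

Lemma adjM n (A B : 'M[C]_n) : adj (A *m B) = adj B *m adj A.
Proof. by rewrite /adj map_mxM trmx_mul. Qed.

Lemma hhM m n p (A : 'M[C]_(m, n)) (B : 'M[C]_(n, p)) : hh (A *m B) = hh B *m hh A.
Proof. by rewrite /hh map_mxM trmx_mul. Qed.

Lemma adjE n (A : 'M[C]_n) : adj A = hh A.
Proof. by []. Qed.

Lemma adjK n (A : 'M[C]_n) : adj (adj A) = A.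
Proof. by apply/matrixP=> i j; rewrite !mxE conjCK. Qed.

Lemma adjD n (A B : 'M[C]_n) : adj (A + B) = adj A + adj B.
Proof. by apply/matrixP=> i j; rewrite !mxE rmorphD. Qed.

Lemma adjZ n k (A : 'M[C]_n) : adj (k *: A) = k^* *: adj A.
Proof. by apply/matrixP=> i j; rewrite !mxE rmorphM. Qed.

Lemma adj_scalar n k : adj (k%:M : 'M[C]_n) = (k^*)%:M.
Proof. by apply/matrixP=> i j; rewrite !mxE rmorphMn eq_sym. Qed.

Lemma adj1 n : adj (1%:M : 'M[C]_n) = 1%:M.
Proof. by rewrite adj_scalar rmorph1. Qed.

Lemma adj_inv n (A : 'M[C]_n) : adj (invmx A) = invmx (adj A).
Proof. by rewrite /adj map_invmx trmx_inv. Qed.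

Lemma qf0_ge0 n (z : 'cV[C]_n) : 0 <= (hh z *m z) ord0 ord0.
Proof.
rewrite /hh !mxE; apply: sumr_ge0 => i _; rewrite !mxE mulrC -normCK.
exact: exprn_ge0.
Qed.

Lemma qf0_eq0 n (z : 'cV[C]_n) : (hh z *m z) ord0 ord0 = 0 -> z = 0.
Proof.
rewrite /hh !mxE => H; apply/matrixP=> i j; rewrite (ord1 j) mxE.
have H0 : forall k : 'I_n, true -> 0 <= ((z ^ Num.Def.conjC)%sesqui)^T ord0 k * z k ord0.
  move=> k _; rewrite !mxE mulrC -normCK; exact: exprn_ge0.
have := @psumr_eq0P _ _ _ _ H0 H i isT.
rewrite !mxE mulrC -normCK => /eqP; rewrite expf_eq0 /= normr_eq0 => /eqP //.
Qed.

Lemma pos_unit n (T : 'M[C]_n) : strictly_pos T -> T \in unitmx.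
Proof.
case=> _ HT; rewrite unitmxE unitfE; apply/negP=> /eqP/eqP.
rewrite -det_tr => /det0P [v vn0 vT].
have : v^T != 0 by rewrite -trmx0 (inj_eq trmx_inj).
move/HT; rewrite -mulmxA; have -> : T *m v^T = 0 by rewrite -[T]trmxK -trmx_mul vT trmx0.
by rewrite mulmx0 mxE ltxx.
Qed.


Lemma adj0 n : adj (0 : 'M[C]_n) = 0.
Proof. by apply/matrixP=> i j; rewrite !mxE rmorph0. Qed.

Lemma conjmxM n (S X Y : 'M[C]_n) : S \in unitmx ->
  (S *m X *m invmx S) *m (S *m Y *m invmx S) = S *m (X *m Y) *m invmx S.
Proof.
move=> uS; rewrite !mulmxA -(mulmxA (S *m X) (invmx S) S) mulVmx // mulmx1.
done.
Qed.

Lemma conjmxD n (S X Y : 'M[C]_n) :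
  S *m X *m invmx S + S *m Y *m invmx S = S *m (X + Y) *m invmx S.
Proof. by rewrite mulmxDr mulmxDl. Qed.

Lemma conjmx1 n (S : 'M[C]_n) : S \in unitmx -> S *m 1%:M *m invmx S = 1%:M.
Proof. by move=> uS; rewrite mulmx1 mulmxV. Qed.

Lemma conjmx0 n (S : 'M[C]_n) : S *m 0 *m invmx S = 0.
Proof. by rewrite mulmx0 mul0mx. Qed.

Lemma qf_split n (x : 'cV[C]_n) (P : 'M[C]_n) :
  hh x *m (P *m adj P) *m x = hh (adj P *m x) *m (adj P *m x).
Proof. by rewrite hhM -adjE adjK !mulmxA. Qed.

Lemma part2M n (a b : 'M[C]_n) : anticomm a b = 1%:M -> a *m a = 0 -> b *m b = 0 ->
  exists M, strictly_pos M /\ M *m adj a = b *m M.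
Proof.
rewrite /anticomm => H aa bb.
pose P := a *m b; pose Q := b *m P.
have aP : a *m P = 0 by rewrite /P mulmxA aa mul0mx.
have Pa : P *m a = a.
  have : a *m (a *m b + b *m a) = a by rewrite H mulmx1.
  by rewrite mulmxDr mulmxA aa mul0mx add0r !mulmxA.
have aQ : a *m Q = P by rewrite /Q mulmxA -/P {2}/P mulmxA Pa.
have bQ : b *m Q = 0 by rewrite /Q mulmxA bb mul0mx.
have id1 : P + Q *m a = 1%:M by rewrite /Q -mulmxA Pa /P.
have bP : b *m P = Q by [].
clearbody P Q.
exists (P *m adj P + Q *m adj Q); split; last first.
  rewrite mulmxDl mulmxDr -(mulmxA P) -(mulmxA Q) -!adjM aP aQ adj0 mulmx0 add0r.
  by rewrite !mulmxA bQ bP mul0mx addr0.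
split.
  by rewrite adjD !adjM !adjK.
move=> x xn0.
rewrite mulmxDr mulmxDl !qf_split mxE.
have g1 := qf0_ge0 _ (adj P *m x); have g2 := qf0_ge0 _ (adj Q *m x).
rewrite lt_def addr_ge0 // andbT; apply/negP.
rewrite paddr_eq0 // => /andP [/eqP /qf0_eq0 h1 /eqP /qf0_eq0 h2].
move: xn0; have -> : x = adj (P + Q *m a) *m x by rewrite id1 adj1 mul1mx.
by rewrite adjD adjM mulmxDl h1 -mulmxA h2 mulmx0 addr0 eqxx.
Qed.


Notation i1 := (lift ord0 ord0 : 'I_2).

Lemma I2 (i : 'I_2) : i = ord0 \/ i = i1.
Proof. by case: i => [[|[|//]]] Hi; [left|right]; apply/val_inj. Qed.

Definition col2 (u v : C) : 'cV[C]_2 := \col_k (if k == ord0 then u else v).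

Lemma col2E0 u v : col2 u v ord0 ord0 = u. Proof. by rewrite mxE. Qed.
Lemma col2E1 u v : col2 u v i1 ord0 = v. Proof. by rewrite mxE. Qed.

Lemma col2_neq0 u v : v != 0 -> col2 u v != 0.
Proof. by move=> vn0; apply/negP=> /eqP/matrixP/(_ i1 ord0); rewrite col2E1 mxE; apply/eqP. Qed.

Lemma col2_neq0l u v : u != 0 -> col2 u v != 0.
Proof. by move=> un0; apply/negP=> /eqP/matrixP/(_ ord0 ord0); rewrite col2E0 mxE; apply/eqP. Qed.

Lemma qf22 (x : 'cV[C]_2) (M : 'M[C]_2) : (hh x *m M *m x) ord0 ord0 =
  (x ord0 ord0)^* * M ord0 ord0 * x ord0 ord0 + (x ord0 ord0)^* * M ord0 i1 * x i1 ord0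
  + (x i1 ord0)^* * M i1 ord0 * x ord0 ord0 + (x i1 ord0)^* * M i1 i1 * x i1 ord0.
Proof. rewrite /hh !mxE !big_ord_recl !big_ord0 !mxE !big_ord_recl !big_ord0 !mxE. ring. Qed.

Lemma sqrt22 (M : 'M[C]_2) : strictly_pos M -> exists T, strictly_pos T /\ T *m T = M.
Proof.
move=> [HM Hpos].
pose p := M ord0 ord0; pose q := M ord0 i1; pose r := M i1 i1.
have M10 : M i1 ord0 = q^* by rewrite -[in LHS]HM !mxE.
have p0 : 0 < p.
  have := Hpos _ (col2_neq0l 1 0 (oner_neq0 C)).
  by rewrite qf22 !col2E0 !col2E1 rmorph0 rmorph1 !(mul0r, mulr0, add0r, addr0, mul1r, mulr1) .
have r0 : 0 < r.
  have := Hpos _ (col2_neq0 0 1 (oner_neq0 C)).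
  by rewrite qf22 !col2E0 !col2E1 rmorph0 rmorph1 !(mul0r, mulr0, add0r, addr0, mul1r, mulr1) .
pose d := p * r - q * M i1 ord0.
have d0 : 0 < d.
  have pn0 : - p != 0 by rewrite oppr_eq0 gt_eqF.
  have := Hpos _ (col2_neq0 q (-p) pn0).
  have pc1 : p^* = p by apply: geC0_conj; exact: ltW.
  have pc : (-p)^* = -p by rewrite raddfN /= pc1.
  rewrite qf22 !col2E0 !col2E1 -/p -/q -/r M10 pc /d.
  have -> : q^* * p * q + q^* * q * - p + - p * q^* * q + - p * r * - p
           = p * (p * r - q * q^*) by ring.
  by rewrite pmulr_rgt0 // M10.
pose s := sqrtC d.
have s0 : 0 < s by rewrite sqrtC_gt0.
have sc : s^* = s by rewrite geC0_conj // ltW.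
have ss : s * s = d by rewrite -expr2 sqrtCK.
pose t := sqrtC (p + r + s + s).
have t0 : 0 < t by rewrite sqrtC_gt0 !addr_gt0.
have tt : t * t = p + r + s + s by rewrite -expr2 sqrtCK.
have tic : (t^-1)^* = t^-1 by rewrite geC0_conj // invr_ge0 ltW.
have CH : M *m M = (p + r) *: M - d%:M.
  apply/matrixP=> i j; rewrite !mxE !big_ord_recl !big_ord0.
  by case: (I2 i) => ->; case: (I2 j) => ->; rewrite /= ?mulr1n ?mulr0n /d -/p -/q -/r; ring.
exists (t^-1 *: (M + s%:M)); split; last first.
  rewrite -scalemxAl -scalemxAr scalerA mulmxDl !mulmxDr mul_mx_scalar mul_scalar_mx.
  rewrite -scalar_mxM ss CH.
  have -> : (p + r) *: M - d%:M + s *: M + (s *: M + d%:M) = (t * t) *: M.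
    by apply/matrixP=> i j; rewrite tt !mxE; ring.
  by rewrite scalerA mulrA mulfVK ?gt_eqF // mulVf ?gt_eqF // scale1r.
split.
  by rewrite adjZ adjD adj_scalar HM sc tic.
move=> x xn0.
have eD : forall A B : 'M[C]_1, (A + B) ord0 ord0 = A ord0 ord0 + B ord0 ord0 by move=> A B; rewrite mxE.
have eZ : forall k (A : 'M[C]_1), (k *: A) ord0 ord0 = k * A ord0 ord0 by move=> k A; rewrite mxE.
rewrite -scalemxAr -scalemxAl eZ mulmxDr mulmxDl mul_mx_scalar -scalemxAl eD eZ.
rewrite pmulr_rgt0 ?invr_gt0 //.
apply: ltr_wpDr; last exact: Hpos.
by rewrite mulr_ge0 ?qf0_ge0 // ltW.
Qed.


Lemma sandw n (S S' X : 'M[C]_n) : S \in unitmx -> S' \in unitmx ->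
  S *m (invmx S *m X *m S') *m invmx S' = X.
Proof.
move=> uS uS'; rewrite !mulmxA mulmxV // mul1mx -mulmxA mulmxV // mulmx1.
done.
Qed.

End Aux.
Arguments pos_unit {C n T}.
Arguments part2M {C n a b}.
Arguments sqrt22 {C M}.
Arguments sandw {C n S S'} X.

Theorem mainTheorem3 (C : numClosedFieldType) :
  (forall c T : 'M[C]_2,
     anticomm c (adj c) = 1%:M -> c *m c = 0 -> strictly_pos T ->
     let a := T *m c *m invmx T in
     let b := T *m adj c *m invmx T in
     anticomm a b = 1%:M /\ a *m a = 0 /\ b *m b = 0)
  /\
  (forall a b : 'M[C]_2,
     anticomm a b = 1%:M -> a *m a = 0 -> b *m b = 0 ->
     exists c T : 'M[C]_2,
       [/\ anticomm c (adj c) = 1%:M, c *m c = 0, strictly_pos T,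
           a = T *m c *m invmx T & b = T *m adj c *m invmx T]).
Proof.
split.
  move=> c T Hac cc HT a b; rewrite /a /b /anticomm.
  have uT := pos_unit HT.
  move: Hac; rewrite /anticomm => Hac.
  rewrite !conjmxM // conjmxD Hac conjmx1 //; split => //.
  by rewrite cc -adjM cc adj0 conjmx0.
move=> a b H aa bb.
have [M [HM HMa]] := part2M H aa bb.
have [T [HT TT]] := sqrt22 HM.
have uT := pos_unit HT.
pose Ti := invmx T.
have uTi : Ti \in unitmx by rewrite unitmx_inv.
have TiK : invmx Ti = T by rewrite invmxK.
have adjT : adj T = T by case: HT.
have adjTi : adj Ti = Ti by rewrite /Ti adj_inv adjT.
have K : T *m adj a *m Ti = Ti *m b *m T.
  have E : invmx Ti *m (T *m adj a *m Ti) *m T = invmx Ti *m (Ti *m b *m T) *m T.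
    rewrite TiK !mulmxA -(mulmxA (T *m T *m adj a)) mulVmx // mulmx1 TT HMa.
    by rewrite mulmxV // mul1mx -mulmxA TT.
  by rewrite -(sandw (T *m adj a *m Ti) uTi uT) -[RHS](sandw (Ti *m b *m T) uTi uT) E.
have adjc : adj (Ti *m a *m invmx Ti) = Ti *m b *m invmx Ti.
  by rewrite !adjM adj_inv adjTi TiK mulmxA K.
exists (Ti *m a *m invmx Ti), T; split => //.
- rewrite adjc /anticomm !conjmxM // conjmxD; move: H; rewrite /anticomm => ->; exact: conjmx1.
- by rewrite conjmxM // aa conjmx0.
- by rewrite TiK sandw.
- by rewrite adjc TiK sandw.
Qed.
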